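(* Consider the stochastic extra-momentum scheme (defined in the context) with non-negative parameters $\alpha,\gamma,\tau$ satisfying, for some constant $\theta\in(0,1]$, $$1+\alpha\mu-\gamma\ge1+\frac{\theta}{\kappa},\qquad\frac{\alpha}{\tau}=1+\frac{\theta}{\kappa},\qquad\frac{1}{8\tau^2L^2+2\gamma}\ge1+\frac{\theta}{\kappa}.$$ Then for every $k\ge0$, $$\mathbb E\big[\|z^k-z^*\|^2\big]\le2\Big(1+\frac{\theta}{\kappa}\Big)^{-k}\|z^0-z^*\|^2+\Big(\frac{\kappa}{\theta}+1\Big)\cdot32\tau^2\sigma^2+\frac{2\kappa\alpha\delta^2}{\theta\mu}.$$
   Context: Let $\mathcal Z\subseteq\mathbb R^n$ be a nonempty closed convex set. Let $F:\mathcal Z\to\mathbb R^n$ satisfy $(F(z)-F(z'))^\top(z-z')\ge\mu\|z-z'\|^2$ and $\|F(z)-F(z')\|\le L\|z-z'\|$ for all $z,z'\in\mathcal Z$, where $0<\mu\le L$; $\kappa=L/\mu$. Let $z^*$ be the unique point of $\mathcal Z$ with $F(z^* )^\top(z-z^* )\ge 0$ for all $z\in\mathcal Z$. $P_{\mathcal Z}$ denotes Euclidean projection onto $\mathcal Z$. A stochastic oracle returns $\hat F(z,\xi)$ for a random sample $\xi$, and satisfies, for every $z\in\mathcal Z$, $\mathbb E_\xi\|\hat F(z,\xi)-F(z)\|\le\delta$ and $\mathbb E_\xi\|\hat F(z,\xi)-F(z)\|^2\le\sigma^2$ for constants $\delta,\sigma\ge0$. Each oracle call $\hat F(z^j)$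 means $\hat F(z^j,\xi^j)$ with a fresh sample independent of all previous samples. The stochastic extra-momentum scheme: starting from $z^0\in\mathcal Z$ with $z^{-1}:=z^0$ and $\hat F(z^{-1}):=\hat F(z^0)$, for $k\ge0$, $z^{k+1}=P_{\mathcal Z}(z^k-\alpha\hat F(z^k)+\gamma(z^k-z^{k-1})-\tau(\hat F(z^k)-\hat F(z^{k-1})))$. *)

(* Defs.v *)
From HB Require Import structures.
From mathcomp Require Import all_boot all_order all_algebra.
From mathcomp Require Import all_classical all_reals all_analysis.
Set Implicit Arguments. Unset Strict Implicit. Unset Printing Implicit Defensive.
Import Order.TTheory GRing.Theory Num.Theory.
Import numFieldNormedType.Exports.
Local Open Scope classical_set_scope.
Local Open Scope ring_scope.

Definition dotv {R : realType} {n : nat} (u v : 'rV[R]_n) : R :=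
  \sum_(i < n) u ord0 i * v ord0 i.
Definition normv {R : realType} {n : nat} (u : 'rV[R]_n) : R :=
  Num.sqrt (dotv u u).

Definition is_projection {R : realType} {n : nat} (Z : set 'rV[R]_n)
  (PZ : 'rV[R]_n -> 'rV[R]_n) : Prop :=
  forall x, Z (PZ x) /\ (forall y, Z y -> normv (x - PZ x) <= normv (x - y)).

Definition vecB (R : realType) (n : nat) := g_sigma_algebraType (@open 'rV[R]_n).

Definition scons {X : Type} (x : X) (s : nat -> X) : nat -> X :=
  fun j => match j with 0 => x | j'.+1 => s j' end.

(* Expectation over k independent samples xi^0, ..., xi^(k-1), each with law mu,
   of a nonnegative quantity g depending on the sample sequence (through its
   first k entries): the iterated (= product, by Tonelli) integral
   \int mu(dxi^0) ... \int mu(dxi^(k-1)) g(xi^0, ..., xi^(k-1)). *)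
Fixpoint iexp {d : measure_display} {X : measurableType d} {R : realType}
  (mu : probability X R) (k : nat) (g : (nat -> X) -> \bar R) : \bar R :=
  match k with
  | 0 => g (fun _ => point)
  | k'.+1 => (\int[mu]_x iexp mu k' (fun s => g (scons x s)))%E
  end.

(* The state at step k is (z^k, z^(k-1)); the update uses
   hatF(z^k) = Fh z^k (s k) and hatF(z^(k-1)) = Fh z^(k-1) (s (k-1)),
   with the convention z^(-1) = z^0 and hatF(z^(-1)) = hatF(z^0) = Fh z^0 (s 0). *)
Fixpoint sem_state {R : realType} {n : nat} {X : Type}
  (PZ : 'rV[R]_n -> 'rV[R]_n) (Fh : 'rV[R]_n -> X -> 'rV[R]_n)
  (alpha gamma tau : R) (z0 : 'rV[R]_n) (s : nat -> X) (k : nat)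
  : 'rV[R]_n * 'rV[R]_n :=
  match k with
  | 0 => (z0, z0)
  | k'.+1 =>
      let zk := (sem_state PZ Fh alpha gamma tau z0 s k').1 in
      let zkm1 := (sem_state PZ Fh alpha gamma tau z0 s k').2 in
      let Fk := Fh zk (s k') in
      let Fkm1 := if k' is k''.+1 then Fh zkm1 (s k'') else Fh z0 (s 0) in
      (PZ (zk - alpha *: Fk + gamma *: (zk - zkm1) - tau *: (Fk - Fkm1)), zk)
  end.

Definition sem_iter {R : realType} {n : nat} {X : Type}
  (PZ : 'rV[R]_n -> 'rV[R]_n) (Fh : 'rV[R]_n -> X -> 'rV[R]_n)
  (alpha gamma tau : R) (z0 : 'rV[R]_n) (s : nat -> X) (k : nat) : 'rV[R]_n :=
  (sem_state PZ Fh alpha gamma tau z0 s k).1.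

(* Main.v *)
Require Import Defs.
From HB Require Import structures.
From mathcomp Require Import all_boot all_order all_algebra.
From mathcomp Require Import all_classical all_reals all_analysis.
From mathcomp Require Import measurable_realfun ring lra.
Import Order.TTheory GRing.Theory Num.Theory.
Import numFieldNormedType.Exports.
Local Open Scope classical_set_scope.
Local Open Scope ring_scope.

Section Dot.
Context {R : realType} {n : nat}.
Implicit Types u v w : 'rV[R]_n.

Lemma dotvC u v : dotv u v = dotv v u.
Proof. by rewrite /dotv; apply: eq_bigr => i _; rewrite mulrC. Qed.
Lemma dotvDl u v w : dotv (u + v) w = dotv u w + dotv v w.
Proof. by rewrite /dotv -big_split; apply: eq_bigr => i _; rewrite !mxE mulrDl. Qed.
Lemma dotvNl u w : dotv (- u) w = - dotv u w.
Proof. by rewrite /dotv -sumrN; apply: eq_bigr => i _; rewrite !mxE mulNr. Qed.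
Lemma dotvZl a u w : dotv (a *: u) w = a * dotv u w.
Proof. by rewrite /dotv mulr_sumr; apply: eq_bigr => i _; rewrite !mxE mulrA. Qed.
Lemma dotvBl u v w : dotv (u - v) w = dotv u w - dotv v w.
Proof. by rewrite dotvDl dotvNl. Qed.
Lemma dotvDr u v w : dotv w (u + v) = dotv w u + dotv w v.
Proof. by rewrite dotvC dotvDl !(dotvC w). Qed.
Lemma dotvNr u w : dotv w (- u) = - dotv w u.
Proof. by rewrite dotvC dotvNl dotvC. Qed.
Lemma dotvBr u v w : dotv w (u - v) = dotv w u - dotv w v.
Proof. by rewrite dotvDr dotvNr. Qed.
Lemma dotvZr a u w : dotv w (a *: u) = a * dotv w u.
Proof. by rewrite dotvC dotvZl dotvC. Qed.
Lemma dotv0l w : dotv 0 w = 0.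
Proof. by rewrite /dotv big1 // => i _; rewrite mxE mul0r. Qed.
Lemma dotv_ge0 u : 0 <= dotv u u.
Proof. by rewrite /dotv sumr_ge0 // => i _; rewrite -expr2 sqr_ge0. Qed.
Lemma dotv_eq0 u : dotv u u = 0 -> u = 0.
Proof.
move=> /eqP; rewrite /dotv psumr_eq0; last by move=> i _; rewrite -expr2 sqr_ge0.
move=> /allP H; apply/rowP => i; rewrite mxE.
have := H i (mem_index_enum i); rewrite /= -expr2 sqrf_eq0 => /eqP.
by rewrite (ord1 0).
Qed.
Lemma normv_ge0 u : 0 <= normv u.
Proof. exact: sqrtr_ge0. Qed.
Lemma normv_sq u : normv u ^+ 2 = dotv u u.
Proof. by rewrite /normv sqr_sqrtr // dotv_ge0. Qed.
Lemma sqB u v : dotv (u - v) (u - v) = dotv u u - 2 * dotv u v + dotv v v.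
Proof. rewrite dotvBl !dotvBr (dotvC v u); ring. Qed.
Lemma sqD u v : dotv (u + v) (u + v) = dotv u u + 2 * dotv u v + dotv v v.
Proof. rewrite dotvDl !dotvDr (dotvC v u); ring. Qed.

Lemma young u v t c : 0 < c ->
  2 * t * dotv u v <= c * t ^+ 2 * dotv u u + dotv v v / c.
Proof.
move=> c0; have := dotv_ge0 ((c * t) *: u - v).
rewrite sqB !dotvZl !dotvZr => h.
have : 0 <= (c * c * t ^+ 2 * dotv u u - 2 * c * t * dotv u v + dotv v v) / c.
  apply: divr_ge0; last exact: ltW. by move: h; congr (_ <= _); ring.
have cn : c != 0 by rewrite gt_eqF.
move=> h2; suff : 0 <= c * t ^+ 2 * dotv u u + dotv v v / c - 2 * t * dotv u v by lra.
move: h2; congr (_ <= _); field => //.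
Qed.

Lemma cs u v : dotv u v <= normv u * normv v.
Proof.
have [a0|a0] := eqVneq (normv u) 0.
  have : dotv u u = 0 by rewrite -normv_sq a0 expr0n.
  by move/dotv_eq0 => u0; rewrite u0 dotv0l mulr_ge0 // normv_ge0.
have [b0|b0] := eqVneq (normv v) 0.
  have : dotv v v = 0 by rewrite -normv_sq b0 expr0n.
  by move/dotv_eq0 => u0; rewrite u0 dotvC dotv0l mulr_ge0 // normv_ge0.
have ha : 0 < normv u by rewrite lt_neqAle eq_sym a0 normv_ge0.
have hb : 0 < normv v by rewrite lt_neqAle eq_sym b0 normv_ge0.
have := young u v 1 (normv v / normv u) (divr_gt0 hb ha).
rewrite -!normv_sq => h.
have e : normv v / normv u * 1 ^+ 2 * normv u ^+ 2 + normv v ^+ 2 / (normv v / normv u)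
   = 2 * (normv u * normv v) by field; rewrite a0 b0.
lra.
Qed.

Lemma cs_abs u v : `|dotv u v| <= normv u * normv v.
Proof.
have := cs u v; have := cs (- u) v; rewrite dotvNl.
have -> : normv (- u) = normv u by rewrite /normv dotvNl dotvNr opprK.
move=> h1 h2; rewrite ler_norml; apply/andP; split; lra.
Qed.
End Dot.

Section Proj.
Local Open Scope convex_scope.
Lemma proj_ineq (R : realType) (n : nat) (Z : set 'rV[R]_n) PZ :
  is_projection Z PZ -> convex_set Z -> forall x y, Z y ->
  dotv (x - PZ x) (y - PZ x) <= 0.
Proof.
move=> hP hC x y Zy; have [Zp Hmin] := hP x.
set p := PZ x in Zp Hmin *; set u := x - p; set v := y - p.
rewrite leNgt; apply/negP => huv.
set uv := dotv u v in huv *; set vv := dotv v v.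
have vv0 : 0 <= vv by exact: dotv_ge0.
have s0 : 0 < uv + vv by lra.
set t := uv / (uv + vv).
have t0 : 0 <= t by apply: divr_ge0; lra.
have t1 : t <= 1 by rewrite ler_pdivrMr // mul1r; lra.
have tp : 0 < t by apply: divr_gt0.
have Zt : Z ((y : convex_lmodType _) <| Itv01 t0 t1 |> p).
  by apply: set_mem; apply: hC; apply: mem_set.
have := Hmin _ Zt.
have -> : (y : convex_lmodType _) <| Itv01 t0 t1 |> p = t *: y + (1 - t) *: p by [].
have -> : x - (t *: y + (1 - t) *: p) = u - t *: v.
  by apply/rowP => i; rewrite !mxE; ring.
rewrite /normv ler_sqrt; last exact: dotv_ge0.
rewrite [X in _ <= X]sqB !dotvZr !dotvZl -/uv -/vv => h.
have e : t * (uv + vv) = uv by rewrite /t mulrAC -mulrA divff ?mulr1 // gt_eqF.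
have h2 : t * (2 * uv - t * vv) <= 0 by lra.
have h3 : 2 * uv - t * vv <= 0.
  by move: h2; rewrite pmulr_rle0.
have h4 : 0 < t * uv by apply: mulr_gt0.
lra.
Qed.

End Proj.

Lemma le_int_nm d (T : measurableType d) (R : realType) (mu : {measure set T -> \bar R})
  (f g : T -> \bar R) : (forall x, (0 <= f x)%E) -> (forall x, (f x <= g x)%E) ->
  (\int[mu]_x f x <= \int[mu]_x g x)%E.
Proof.
move=> f0 fg.
have g0 : forall x, (0 <= g x)%E by move=> x; apply: le_trans (fg x).
rewrite (ge0_integralTE mu f0) (ge0_integralTE mu g0) /=.
apply: ereal_sup_le => _ [h hf <-]; exists h => //= x.
exact: le_trans (hf x) (fg x).
Qed.

Section Iexp.
Context {d : measure_display} {X : measurableType d} {R : realType} (P : probability X R).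

Lemma iexp_ge0 k f : (forall s, (0 <= f s)%E) -> (0 <= iexp P k f)%E.
Proof.
elim: k f => [|k IH] f f0 /=; first exact: f0.
by apply: integral_ge0 => x _; apply: IH.
Qed.

Lemma iexp_le k f g : (forall s, (0 <= f s)%E) -> (forall s, (f s <= g s)%E) ->
  (iexp P k f <= iexp P k g)%E.
Proof.
elim: k f g => [|k IH] f g f0 fg /=; first exact: fg.
apply: le_int_nm => x; first by apply: iexp_ge0.
by apply: IH.
Qed.
End Iexp.

Lemma meas_coord (R : realType) (n : nat) (i : 'I_n) :
  measurable_fun setT (fun v : g_sigma_algebraType (@open 'rV[R]_n) => (v : 'rV[R]_n) ord0 i).
Proof.
apply: (measurability _ (RGenOpens.measurableE R)).
move=> _ [_ [a [b ->]] <-]; apply: sub_sigma_algebra.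
rewrite setTI; apply: (continuousP _).1; first exact: coord_continuous.
exact: interval_open.
Qed.

Section Meas.
Variables (R : realType) (n : nat) (d : measure_display) (Xi : measurableType d)
  (Fh : 'rV[R]_n -> Xi -> 'rV[R]_n).
Hypothesis H : measurable_fun setT (fun p : (vecB R n * Xi)%type => (Fh p.1 p.2 : vecB R n)).

Lemma mFh z : measurable_fun setT (fun x => (Fh z x : g_sigma_algebraType (@open 'rV[R]_n))).
Proof. have h := measurable_fun_pair2 (z : g_sigma_algebraType (@open 'rV[R]_n)) H. exact: h. Qed.

Lemma meas_norm z c : measurable_fun setT (fun x => normv (Fh z x - c)).
Proof.
have -> : (fun x => normv (Fh z x - c)) = Num.sqrt \o (fun x =>
   \sum_(i < n) ((Fh z x ord0 i - c ord0 i) * (Fh z x ord0 i - c ord0 i))).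
  apply/funext => x /=; rewrite /normv /dotv; congr Num.sqrt.
  by apply: eq_bigr => i _; rewrite !mxE.
have msq : measurable_fun setT (@Num.sqrt R).
  by apply: continuous_measurable_fun; exact: sqrt_continuous.
apply: (measurableT_comp msq).
apply: measurable_sum => i.
have hi : measurable_fun setT (fun x => Fh z x ord0 i - c ord0 i).
  have hc : measurable_fun setT (fun x => Fh z x ord0 i).
    exact: (measurableT_comp (meas_coord R n i) (mFh z)).
  exact: (measurable_funB hc (measurable_cst _)).
exact: measurable_funM.
Qed.

Variables (P : probability Xi R) (F : 'rV[R]_n -> 'rV[R]_n) (z : 'rV[R]_n) (delta sigma : R).
Hypothesis hd : (\int[P]_x (normv (Fh z x - F z))%:E <= delta%:E)%E.
Hypothesis hs : (\int[P]_x (normv (Fh z x - F z) ^+ 2)%:E <= (sigma ^+ 2)%:E)%E.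

Lemma int_bound K k1 k2 : 0 <= K -> 0 <= k1 -> 0 <= k2 ->
  (\int[P]_x (K + k1 * normv (Fh z x - F z) ^+ 2 + k2 * normv (Fh z x - F z))%:E
    <= (K + k1 * sigma ^+ 2 + k2 * delta)%:E)%E.
Proof.
move=> K0 k10 k20.
have mN := meas_norm z (F z).
have mN2 : measurable_fun setT (fun x => normv (Fh z x - F z) ^+ 2).
  exact: measurable_funX.
have N0 x : 0 <= normv (Fh z x - F z) := normv_ge0 _.
under eq_integral do rewrite !EFinD !EFinM.
have mA : measurable_fun setT (fun x => k1%:E * (normv (Fh z x - F z) ^+ 2)%:E)%E.
  by apply: emeasurable_funM => //; apply/measurable_EFinP.
have mB : measurable_fun setT (fun x => k2%:E * (normv (Fh z x - F z))%:E)%E.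
  by apply: emeasurable_funM => //; apply/measurable_EFinP.
have A0 : forall x, setT x -> (0 <= k1%:E * (normv (Fh z x - F z) ^+ 2)%:E)%E.
  by move=> x _; rewrite mule_ge0 // lee_fin ?sqr_ge0.
have B0 : forall x, setT x -> (0 <= k2%:E * (normv (Fh z x - F z))%:E)%E.
  by move=> x _; rewrite mule_ge0 // lee_fin.
have C0 : forall x, setT x -> (0 <= K%:E + k1%:E * (normv (Fh z x - F z) ^+ 2)%:E)%E.
  by move=> x _; apply: adde_ge0; [rewrite lee_fin | exact: A0].
have mC : measurable_fun setT (fun x => K%:E + k1%:E * (normv (Fh z x - F z) ^+ 2)%:E)%E.
  by apply: emeasurable_funD => //; exact: measurable_cst.
rewrite (ge0_integralD _ measurableT C0 mC B0 mB).
rewrite (ge0_integralD _ measurableT _ (measurable_cst _) A0 mA); last by move=> x _; rewrite lee_fin.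
rewrite integral_cst //.
set m := (X in (K%:E * X)%E).
have -> : m = 1%E by rewrite /m; exact: probability_setT.
rewrite mule1.
rewrite ge0_integralZl //; last 2 first.
- exact/measurable_EFinP.
- by move=> x _; rewrite lee_fin sqr_ge0.
rewrite ge0_integralZl //; last 2 first.
- exact/measurable_EFinP.
- by move=> x _; rewrite lee_fin.
rewrite !EFinD !EFinM; apply: leeD; [apply: leeD; [by [] | ] | ].
- by apply: lee_wpmul2l; [rewrite lee_fin | exact: hs].
- by apply: lee_wpmul2l; [rewrite lee_fin | exact: hd].
Qed.
End Meas.

Lemma real_step (R : realType) (r q rm M c2 tau mu sigma delta W D nD : R) :
  0 < r -> r <= 1 -> r * q = 1 -> 0 <= rm -> M * (1 - r) = 1 -> 0 < tau -> 0 < mu ->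
  D = nD ^+ 2 -> c2 = 32 * tau ^+ 2 * sigma ^+ 2 + 2 * tau * delta ^+ 2 * r / mu ->
  rm * (2 * r * (W - tau * mu * D)) + c2 * M * (1 - rm)
  + rm * (2 * r * (8 * (1 + q) * tau ^+ 2)) * sigma ^+ 2
  + rm * (2 * r * (2 * tau * nD)) * delta
  <= rm * r * (2 * W) + c2 * M * (1 - rm * r).
Proof.
move=> r0 r1 rq rm0 hM t0 m0 hD hc2.
have e : c2 * M * (1 - rm * r) = c2 * M * (1 - rm) + c2 * rm.
  have : c2 * M * (1 - rm * r) - c2 * M * (1 - rm) = c2 * rm * (M * (1 - r)) by ring.
  rewrite hM mulr1 => h; lra.
rewrite e.
have X1 : 0 <= 16 * (1 - r) * tau ^+ 2 * sigma ^+ 2.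
  have h1r : 0 <= 1 - r by lra.
  by apply: mulr_ge0; [apply: mulr_ge0; [apply: mulr_ge0 => //| exact: sqr_ge0] | exact: sqr_ge0].
have X2 : 0 <= 2 * r * tau / mu * (mu * nD - delta) ^+ 2.
  apply: mulr_ge0; last exact: sqr_ge0.
  apply: divr_ge0; last exact: ltW.
  by apply: mulr_ge0; [apply: mulr_ge0|]; lra.
have eX : c2 + 2 * r * tau * mu * D - 2 * r * (8 * (1 + q) * tau ^+ 2) * sigma ^+ 2
   - 2 * r * (2 * tau * nD) * delta
   = 16 * (1 - r) * tau ^+ 2 * sigma ^+ 2 + 2 * r * tau / mu * (mu * nD - delta) ^+ 2.
  have rq' : r * q * 16 * tau ^+ 2 * sigma ^+ 2 = 16 * tau ^+ 2 * sigma ^+ 2 by rewrite rq; ring.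
  rewrite hc2 hD; move: rq'; set A := r * q * 16 * tau ^+ 2 * sigma ^+ 2 => rq'.
  have mu0 : mu != 0 by rewrite gt_eqF.
  have : 2 * r * tau / mu * (mu * nD - delta) ^+ 2 = 2 * r * tau * mu * nD ^+ 2 - 4 * r * tau * nD * delta + 2 * tau * delta ^+ 2 * r / mu.
    by field.
  move=> ->. rewrite /A in rq'. lra.
have hX : 0 <= rm * (c2 + 2 * r * tau * mu * D - 2 * r * (8 * (1 + q) * tau ^+ 2) * sigma ^+ 2
   - 2 * r * (2 * tau * nD) * delta).
  by rewrite eX; apply: mulr_ge0 => //; lra.
lra.
Qed.

Lemma expand4 (R : realType) (n : nat) (b ep e d D : 'rV[R]_n) :
  dotv (b - ep + e) (d + D) =
  dotv b d + dotv b D - dotv ep d - dotv ep D + dotv e d + dotv e D.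
Proof. rewrite !dotvDl !dotvNl !dotvDr; ring. Qed.

Section Main.
Variables (R : realType) (n : nat) (Z : set 'rV[R]_n) (F : 'rV[R]_n -> 'rV[R]_n)
  (mu L : R) (zs : 'rV[R]_n) (PZ : 'rV[R]_n -> 'rV[R]_n)
  (d : measure_display) (Xi : measurableType d) (P : probability Xi R)
  (Fh : 'rV[R]_n -> Xi -> 'rV[R]_n) (delta sigma alpha gamma tau q : R).
Hypothesis hC : convex_set Z.
Hypothesis mu0 : 0 < mu.
Hypothesis hmono : forall z z', Z z -> Z z' -> mu * normv (z - z') ^+ 2 <= dotv (F z - F z') (z - z').
Hypothesis hlip : forall z z', Z z -> Z z' -> normv (F z - F z') <= L * normv (z - z').
Hypothesis Zzs : Z zs.
Hypothesis hopt : forall z, Z z -> 0 <= dotv (F zs) (z - zs).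
Hypothesis hP : is_projection Z PZ.
Hypothesis L0 : 0 <= L.
Hypothesis alpha0 : 0 <= alpha.
Hypothesis gamma0 : 0 <= gamma.
Hypothesis tau0 : 0 < tau.
Hypothesis q1 : 1 <= q.
Hypothesis C1 : q <= 1 + alpha * mu - gamma.
Hypothesis halpha : alpha = tau * q.
Hypothesis C3 : q * (gamma + 4 * tau ^+ 2 * L ^+ 2) <= 1 / 2.

Let dv (u : 'rV[R]_n) := dotv u u.
Let a := gamma + 4 * tau ^+ 2 * L ^+ 2.

Definition Wf (S : 'rV[R]_n * 'rV[R]_n * 'rV[R]_n) : R :=
  (1 + tau * mu) * dotv (S.1.1 - zs) (S.1.1 - zs)
  - 2 * tau * dotv (F S.1.1 - S.2) (S.1.1 - zs)
  + (gamma + 4 * tau ^+ 2 * L ^+ 2) * dotv (S.1.1 - S.1.2) (S.1.1 - S.1.2)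
  + 8 * tau ^+ 2 * dotv (S.2 - F S.1.2) (S.2 - F S.1.2).

Definition Tst (S : 'rV[R]_n * 'rV[R]_n * 'rV[R]_n) (x : Xi) :=
  let z := S.1.1 in let zp := S.1.2 in let g := S.2 in
  ((PZ (z - alpha *: Fh z x + gamma *: (z - zp) - tau *: (Fh z x - g)), z), Fh z x).

Lemma lip2 z z' : Z z -> Z z' -> dv (F z - F z') <= L ^+ 2 * dv (z - z').
Proof.
move=> hz hz'; rewrite /dv -!normv_sq -exprMn.
by rewrite lerXn2r ?nnegrE ?normv_ge0 ?mulr_ge0 ?normv_ge0 // hlip.
Qed.

Lemma core z zp g fh z' :
  z' = PZ (z - alpha *: fh + gamma *: (z - zp) - tau *: (fh - g)) ->
  dv (z' - zs) + dv (z' - z) - dv (z - zs) <=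
  - 2 * alpha * mu * dv (z' - zs) + 2 * alpha * dotv (F z' - fh) (z' - zs)
  + 2 * gamma * dotv (z - zp) (z' - zs) - 2 * tau * dotv (fh - g) (z' - zs).
Proof.
move=> hz'.
set w := z - alpha *: fh + gamma *: (z - zp) - tau *: (fh - g).
have Zz' : Z z' by rewrite hz'; case: (hP w).
have h := @proj_ineq R n Z PZ hP hC w zs Zzs; rewrite -hz' in h.
have e1 : w - z' = - (z' - z) - alpha *: fh + gamma *: (z - zp) - tau *: (fh - g).
  by apply/rowP => i; rewrite !mxE; ring.
have e2 : zs - z' = - (z' - zs) by apply/rowP => i; rewrite !mxE; ring.
rewrite e1 e2 !dotvNr !dotvDl !dotvNl !dotvZl in h.
have e3 : dotv fh (z' - zs) = dotv (F z') (z' - zs) - dotv (F z' - fh) (z' - zs).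
  by rewrite dotvBl; ring.
have e4 : z - zs = (z' - zs) - (z' - z) by apply/rowP => i; rewrite !mxE; ring.
have e5 : dv (z - zs) = dv (z' - zs) - 2 * dotv (z' - z) (z' - zs) + dv (z' - z).
  by rewrite /dv e4 sqB (dotvC (z' - zs)).
have hm := hmono z' zs Zz' Zzs; rewrite normv_sq in hm.
have ho := hopt z' Zz'.
have e6 : dotv (F z' - F zs) (z' - zs) = dotv (F z') (z' - zs) - dotv (F zs) (z' - zs).
  by rewrite dotvBl.
rewrite e6 in hm.
have hm2 : alpha * (mu * dv (z' - zs)) <= alpha * (dotv (F z') (z' - zs) - dotv (F zs) (z' - zs)).
  by rewrite ler_wpM2l.
have ho2 : 0 <= alpha * dotv (F zs) (z' - zs) by rewrite mulr_ge0.
rewrite e5; rewrite e3 in h; rewrite /dv in hm2 *.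
lra.
Qed.

Lemma step_ineq S x : Z S.1.1 -> Z S.1.2 ->
  q * Wf (Tst S x) <= Wf S - tau * mu * dv (S.1.1 - zs)
   + 8 * (1 + q) * tau ^+ 2 * dv (Fh S.1.1 x - F S.1.1)
   + 2 * tau * (normv (Fh S.1.1 x - F S.1.1) * normv (S.1.1 - zs)).
Proof.
case: S => [[z zp] g] /= hz hzp.
set fh := Fh z x.
set z' := PZ (z - alpha *: fh + gamma *: (z - zp) - tau *: (fh - g)).
have hc := core z zp g fh z' erefl.
rewrite /Wf /Tst /= -/fh -/z'.
have V1 : fh - g = (F z - F zp) - (g - F zp) + (fh - F z).
  by apply/rowP => i; rewrite !mxE; ring.
have V2 : z' - zs = (z - zs) + (z' - z) by apply/rowP => i; rewrite !mxE; ring.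
have E1 : dotv (fh - g) (z' - zs) =
  dotv (F z - F zp) (z - zs) + dotv (F z - F zp) (z' - z) - dotv (g - F zp) (z - zs)
  - dotv (g - F zp) (z' - z) + dotv (fh - F z) (z - zs) + dotv (fh - F z) (z' - z).
  by rewrite V1 V2 expand4.
have E2 : dotv (F z - g) (z - zs) = dotv (F z - F zp) (z - zs) - dotv (g - F zp) (z - zs).
  have -> : F z - g = (F z - F zp) - (g - F zp) by apply/rowP => i; rewrite !mxE; ring.
  by rewrite dotvBl.
rewrite E1 in hc; rewrite E2.
have Y1 : 2 * dotv (z - zp) (z' - zs) <= dv (z - zp) + dv (z' - zs).
  have := young (z - zp) (z' - zs) 1 1 ltr01; rewrite /dv expr1n divr1; lra.
have Y1' : gamma * (2 * dotv (z - zp) (z' - zs)) <= gamma * (dv (z - zp) + dv (z' - zs)).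
  exact: ler_wpM2l.
have h4 : (0:R) < 4 by lra.
have h8 : (0:R) < 8 by lra.
have Y2 := young (F z - F zp) (z' - z) (- tau) 4 h4.
have Y3 := young (g - F zp) (z' - z) tau 8 h8.
have Y4 := young (fh - F z) (z' - z) (- tau) 8 h8.
rewrite sqrrN in Y2 Y4.
have CS : - dotv (fh - F z) (z - zs) <= normv (fh - F z) * normv (z - zs).
  by apply: le_trans (cs_abs _ _); rewrite -normrN ler_norm.
have CS' : 2 * tau * (- dotv (fh - F z) (z - zs)) <= 2 * tau * (normv (fh - F z) * normv (z - zs)).
  by apply: ler_wpM2l => //; have := tau0; lra.
have Lp := lip2 z zp hz hzp.
have Lp' : 4 * tau ^+ 2 * dv (F z - F zp) <= 4 * tau ^+ 2 * (L ^+ 2 * dv (z - zp)).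
  by apply: ler_wpM2l => //; rewrite mulr_ge0 // sqr_ge0.
have d'0 : 0 <= dv (z' - zs) := dotv_ge0 _.
have D'0 : 0 <= dv (z' - z) := dotv_ge0 _.
have C1' : (q + alpha * mu) * dv (z' - zs) <= (1 + 2 * alpha * mu - gamma) * dv (z' - zs).
  apply: ler_wpM2r => //; have := C1; lra.
have C3' : q * (gamma + 4 * tau ^+ 2 * L ^+ 2) * dv (z' - z) <= 1 / 2 * dv (z' - z).
  by apply: ler_wpM2r.
rewrite halpha in hc C1'.
rewrite /dv in hc Y1' Y2 Y3 Y4 Lp' d'0 D'0 C1' C3' *.
lra.
Qed.

Lemma step0 z0 x : Z z0 ->
  q * Wf (Tst ((z0, z0), Fh z0 x) x) <= dv (z0 - zs) + 8 * q * tau ^+ 2 * dv (Fh z0 x - F z0).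
Proof.
move=> hz0; rewrite /Wf /Tst /=.
set fh := Fh z0 x.
set z' := PZ (z0 - alpha *: fh + gamma *: (z0 - z0) - tau *: (fh - fh)).
have hc := core z0 z0 fh fh z' erefl.
rewrite !subrr !dotv0l in hc.
have d'0 : 0 <= dv (z' - zs) := dotv_ge0 _.
have D'0 : 0 <= dv (z' - z0) := dotv_ge0 _.
have C1' : (q + tau * q * mu) * dv (z' - zs) <= (1 + 2 * (tau * q) * mu) * dv (z' - zs).
  apply: ler_wpM2r => //; have := C1; have := gamma0; have := halpha; nra.
have C3' : q * (gamma + 4 * tau ^+ 2 * L ^+ 2) * dv (z' - z0) <= 1 * dv (z' - z0).
  by apply: ler_wpM2r => //; have := C3; lra.
rewrite halpha in hc.
rewrite /dv in hc d'0 D'0 C1' C3' *.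
lra.
Qed.

Lemma lowbound S : Z S.1.1 -> Z S.1.2 ->
  dv (S.1.1 - zs) / 2 + tau * mu * dv (S.1.1 - zs) <= Wf S.
Proof.
case: S => [[z zp] g] /= hz hzp; rewrite /Wf /=.
have h2 : (0:R) < 2 by lra.
have Y := young (F z - g) (z - zs) tau 2 h2.
have eA : F z - g = (F z - F zp) - (g - F zp) by apply/rowP => i; rewrite !mxE; ring.
have sA : dv (F z - g) = dv (F z - F zp) - 2 * dotv (F z - F zp) (g - F zp) + dv (g - F zp).
  by rewrite /dv eA sqB.
have Y' := young (F z - F zp) (g - F zp) (- 1) 1 ltr01.
rewrite sqrrN expr1n divr1 in Y'.
have Lp := lip2 z zp hz hzp.
have t2 : 0 <= tau ^+ 2 := sqr_ge0 _.
have P1 : 2 * tau ^+ 2 * dv (F z - g) <= 2 * tau ^+ 2 * (2 * dv (F z - F zp) + 2 * dv (g - F zp)).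
  by apply: ler_wpM2l; [lra | rewrite sA /dv; lra].
have P2 : 4 * tau ^+ 2 * dv (F z - F zp) <= 4 * tau ^+ 2 * (L ^+ 2 * dv (z - zp)).
  by apply: ler_wpM2l => //; lra.
have P3 : 0 <= gamma * dv (z - zp) by apply: mulr_ge0 => //; exact: dotv_ge0.
have P4 : 0 <= tau ^+ 2 * dv (g - F zp) by apply: mulr_ge0 => //; exact: dotv_ge0.
rewrite /dv in Y P1 P2 P3 P4 *.
lra.
Qed.


Fixpoint gen (S : 'rV[R]_n * 'rV[R]_n * 'rV[R]_n) (s : nat -> Xi) (m : nat) :=
  match m with 0 => S | m'.+1 => gen (Tst S (s 0)) (fun j => s j.+1) m' end.

Lemma gen_Z m : forall S s, Z S.1.1 -> Z S.1.2 -> Z (gen S s m).1.1 /\ Z (gen S s m).1.2.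
Proof.
elim: m => [|m IH] S s hz hzp /=; first by [].
apply: IH => //=; by case: (hP (S.1.1 - alpha *: Fh S.1.1 (s 0) + gamma *: (S.1.1 - S.1.2)
  - tau *: (Fh S.1.1 (s 0) - S.2))).
Qed.

Lemma gen_last m : forall S s, gen S s m.+1 = Tst (gen S s m) (s m).
Proof.
elim: m => [|m IH] S s; first reflexivity.
exact: (IH (Tst S (s 0)) (fun j => s j.+1)).
Qed.

Lemma Wf_ge0 S : Z S.1.1 -> Z S.1.2 -> 0 <= Wf S.
Proof.
move=> h1 h2; have := lowbound S h1 h2.
have D0 := dotv_ge0 (S.1.1 - zs).
have := mulr_ge0 (mulr_ge0 (ltW tau0) (ltW mu0)) D0.
rewrite /dv => *; lra.
Qed.

Hypothesis hmeas : measurable_fun setT (fun p : (vecB R n * Xi)%type => (Fh p.1 p.2 : vecB R n)).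
Hypothesis hd : forall z, Z z -> (\int[P]_x (normv (Fh z x - F z))%:E <= delta%:E)%E.
Hypothesis hs : forall z, Z z -> (\int[P]_x (normv (Fh z x - F z) ^+ 2)%:E <= (sigma ^+ 2)%:E)%E.
Variable M : R.
Hypothesis hM : M * (1 - q^-1) = 1.

Definition c2 := 32 * tau ^+ 2 * sigma ^+ 2 + 2 * tau * delta ^+ 2 * q^-1 / mu.

Lemma Tst_Z S x : Z S.1.1 -> Z (Tst S x).1.1 /\ Z (Tst S x).1.2.
Proof.
move=> hz; split => //=.
by case: (hP (S.1.1 - alpha *: Fh S.1.1 x + gamma *: (S.1.1 - S.1.2) - tau *: (Fh S.1.1 x - S.2))).
Qed.

Lemma c2_ge0 : 0 <= c2.
Proof.
rewrite /c2; apply: addr_ge0.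
  by apply: mulr_ge0; [apply: mulr_ge0; [lra | exact: sqr_ge0] | exact: sqr_ge0].
apply: divr_ge0; last exact: ltW.
apply: mulr_ge0; last by rewrite invr_ge0; have := q1; lra.
apply: mulr_ge0; last exact: sqr_ge0.
by apply: mulr_ge0 => //; exact: ltW.
Qed.

Lemma Gm m : forall S, Z S.1.1 -> Z S.1.2 ->
  (iexp P m (fun s => (2 * Wf (gen S s m))%:E)
    <= (q^-1 ^+ m * (2 * Wf S) + c2 * M * (1 - q^-1 ^+ m))%:E)%E.
Proof.
have q0 : 0 < q by have := q1; lra.
have r0 : 0 < q^-1 by rewrite invr_gt0.
have r1 : q^-1 <= 1 by rewrite invf_le1 //; exact: q1.
have rq : q^-1 * q = 1 by rewrite mulVf // gt_eqF.
have M0 : 0 <= M.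
  have h : 0 <= 1 - q^-1 by lra.
  have := hM; have := c2_ge0; nra.
elim: m => [|m IH] S hz hzp.
  by rewrite /= expr0 mul1r subrr mulr0 addr0.
rewrite [iexp _ _ _]/=.
set rm := q^-1 ^+ m.
have rm0 : 0 <= rm by apply: exprn_ge0; exact: ltW.
have rm1 : rm <= 1 by apply: exprn_ile1 => //; exact: ltW.
apply: (@le_trans _ _ (\int[P]_x ((rm * (2 * Wf (Tst S x)) + c2 * M * (1 - rm))%:E))%E).
  apply: le_int_nm => x.
  - apply: iexp_ge0 => s0; rewrite lee_fin.
    have [h1 h2] := Tst_Z S x hz.
    have [h3 h4] := gen_Z m _ s0 h1 h2.
    by have := Wf_ge0 _ h3 h4; lra.
  - have [h1 h2] := Tst_Z S x hz.
    exact: (IH (Tst S x) h1 h2).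
set z := S.1.1.
set nD := normv (z - zs).
pose K := rm * (2 * q^-1 * (Wf S - tau * mu * dv (z - zs))) + c2 * M * (1 - rm).
pose k1 := rm * (2 * q^-1 * (8 * (1 + q) * tau ^+ 2)).
pose k2 := rm * (2 * q^-1 * (2 * tau * nD)).
have hlow := lowbound S hz hzp.
have D0 : 0 <= dv (z - zs) := dotv_ge0 _.
have nD0 : 0 <= nD := normv_ge0 _.
have K0 : 0 <= K.
  rewrite /K; apply: addr_ge0.
    apply: mulr_ge0 => //; apply: mulr_ge0; first by lra.
    rewrite -/z in hlow; lra.
  by apply: mulr_ge0; [apply: mulr_ge0; [exact: c2_ge0 | exact: M0] | lra].
have k10 : 0 <= k1.
  rewrite /k1; apply: mulr_ge0 => //; apply: mulr_ge0; first by lra.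
  apply: mulr_ge0; [have := q1; lra | exact: sqr_ge0].
have k20 : 0 <= k2.
  rewrite /k2; apply: mulr_ge0 => //; apply: mulr_ge0; first by lra.
  by apply: mulr_ge0 => //; have := tau0; lra.
apply: (@le_trans _ _ (\int[P]_x ((K + k1 * normv (Fh z x - F z) ^+ 2 + k2 * normv (Fh z x - F z))%:E))%E).
  apply: le_int_nm => x.
  - rewrite lee_fin; have [h1 h2] := Tst_Z S x hz.
    have := Wf_ge0 _ h1 h2; have := c2_ge0.
    move=> hc hw; apply: addr_ge0.
      by apply: mulr_ge0 => //; lra.
    by apply: mulr_ge0; [apply: mulr_ge0 => //; exact: c2_ge0 | lra].
  - rewrite lee_fin.
    have h := step_ineq S x hz hzp.
    rewrite -/z /dv -normv_sq -/nD in h.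
    set RHS := (X in _ <= X) in h.
    have h' : Wf (Tst S x) <= q^-1 * RHS.
      rewrite -[Wf (Tst S x)]mul1r -rq -mulrA; apply: ler_wpM2l => //; exact: ltW.
    have h'' : rm * (2 * Wf (Tst S x)) <= rm * (2 * (q^-1 * RHS)).
      by apply: ler_wpM2l => //; lra.
    rewrite /RHS /K /k1 /k2 /dv -!normv_sq -/nD in h'' *; lra.

apply: le_trans (@int_bound R n d Xi Fh hmeas P F z delta sigma (hd z hz) (hs z hz) K k1 k2 K0 k10 k20) _.
rewrite lee_fin.
have := @real_step R (q^-1) q rm M c2 tau mu sigma delta (Wf S) (dv (z - zs)) nD r0 r1 rq rm0 hM tau0 mu0 (esym (normv_sq (z - zs))) (erefl c2).
have e : q^-1 ^+ m.+1 = rm * q^-1 by rewrite exprSr.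
rewrite e /K /k1 /k2 /dv => h; lra.
Qed.

Lemma sem_step (z0 : 'rV[R]_n) s k : sem_state PZ Fh alpha gamma tau z0 s k.+2 =
  (PZ ((sem_state PZ Fh alpha gamma tau z0 s k.+1).1
       - alpha *: Fh (sem_state PZ Fh alpha gamma tau z0 s k.+1).1 (s k.+1)
       + gamma *: ((sem_state PZ Fh alpha gamma tau z0 s k.+1).1 - (sem_state PZ Fh alpha gamma tau z0 s k.+1).2)
       - tau *: (Fh (sem_state PZ Fh alpha gamma tau z0 s k.+1).1 (s k.+1)
                 - Fh (sem_state PZ Fh alpha gamma tau z0 s k.+1).2 (s k))),
   (sem_state PZ Fh alpha gamma tau z0 s k.+1).1).
Proof. reflexivity. Qed.

Definition S0 (z0 : 'rV[R]_n) x : 'rV[R]_n * 'rV[R]_n * 'rV[R]_n := ((z0, z0), Fh z0 x).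

Lemma sem_gen z0 m s : sem_state PZ Fh alpha gamma tau z0 s m.+1 = (gen (S0 z0 (s 0)) s m.+1).1
  /\ (gen (S0 z0 (s 0)) s m.+1).2 = Fh (sem_state PZ Fh alpha gamma tau z0 s m.+1).2 (s m).
Proof.
elim: m => [|m [IH1 IH2]]; first by split.
rewrite gen_last; set G := gen (S0 z0 (s 0)) s m.+1 in IH1 IH2 *.
rewrite sem_step -IH2 IH1; split; reflexivity.
Qed.

Lemma final_bound z0 k : Z z0 ->
 (iexp P k (fun s => (normv (sem_iter PZ Fh alpha gamma tau z0 s k - zs) ^+ 2)%:E)
   <= (2 * q^-1 ^+ k * dv (z0 - zs) + c2 * M)%:E)%E.
Proof.
move=> Zz0.
have q0 : 0 < q by have := q1; lra.
have r0 : 0 < q^-1 by rewrite invr_gt0.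
have r1 : q^-1 <= 1 by rewrite invf_le1 //; exact: q1.
have rq : q^-1 * q = 1 by rewrite mulVf // gt_eqF.
have c20 := c2_ge0.
have M1 : 1 <= M.
  have h : 0 <= 1 - q^-1 by lra.
  have h' : (1 - q^-1) * M <= 1 * M.
    have hM' := hM.
    case: (leP 0 M) => hM0; first by apply: ler_wpM2r => //; lra.
    by exfalso; nra.
  have := hM; nra.
have cM : 32 * tau ^+ 2 * sigma ^+ 2 <= c2 * M.
  have h1 : 32 * tau ^+ 2 * sigma ^+ 2 <= c2.
    rewrite /c2 lerDl; apply: divr_ge0; last exact: ltW.
    apply: mulr_ge0; last exact: ltW.
    apply: mulr_ge0; last exact: sqr_ge0.
    by apply: mulr_ge0 => //; exact: ltW.
  have h2 : c2 * 1 <= c2 * M by apply: ler_wpM2l.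
  lra.
have D0 : 0 <= dv (z0 - zs) := dotv_ge0 _.
case: k => [|m].
  rewrite /= /sem_iter /= lee_fin normv_sq expr0 mulr1.
  have := mulr_ge0 c20 (le_trans ler01 M1); move: D0; rewrite /dv; lra.
rewrite [iexp _ _ _]/=.
set rm := q^-1 ^+ m.
have rm0 : 0 <= rm by apply: exprn_ge0; exact: ltW.
have rm1 : rm <= 1 by apply: exprn_ile1 => //; exact: ltW.
apply: (@le_trans _ _ (\int[P]_x ((rm * (2 * Wf (Tst (S0 z0 x) x)) + c2 * M * (1 - rm))%:E))%E).
  apply: le_int_nm => x.
  - apply: iexp_ge0 => s0; rewrite lee_fin; exact: sqr_ge0.
  - have [h1 h2] := Tst_Z (S0 z0 x) x Zz0.
    apply: le_trans (Gm m (Tst (S0 z0 x) x) h1 h2).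
    apply: iexp_le => s0; first by rewrite lee_fin sqr_ge0.
    rewrite lee_fin /sem_iter.
    have [e1 _] := sem_gen z0 m (scons x s0).
    rewrite e1.
    have [h3 h4] := gen_Z m (Tst (S0 z0 x) x) s0 h1 h2.
    have hl := lowbound _ h3 h4.
    have := mulr_ge0 (mulr_ge0 (ltW tau0) (ltW mu0)) (dotv_ge0 ((gen (Tst (S0 z0 x) x) s0 m).1.1 - zs)).
    rewrite normv_sq /dv in hl *.
    change ((gen (S0 z0 x) (scons x s0) m.+1).1.1) with ((gen (Tst (S0 z0 x) x) s0 m).1.1).
    lra.
pose K := rm * (2 * q^-1 * dv (z0 - zs)) + c2 * M * (1 - rm).
pose k1 := rm * (16 * tau ^+ 2).
have K0 : 0 <= K.
  rewrite /K; apply: addr_ge0.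
    by apply: mulr_ge0 => //; apply: mulr_ge0 => //; lra.
  by apply: mulr_ge0; [apply: mulr_ge0 => //; lra | lra].
have k10 : 0 <= k1 by apply: mulr_ge0 => //; apply: mulr_ge0; [lra | exact: sqr_ge0].
have l00 : (0:R) <= 0 by [].
apply: (@le_trans _ _ (\int[P]_x ((K + k1 * normv (Fh z0 x - F z0) ^+ 2 + 0 * normv (Fh z0 x - F z0))%:E))%E).
  apply: le_int_nm => x.
  - rewrite lee_fin; have [h1 h2] := Tst_Z (S0 z0 x) x Zz0.
    have := Wf_ge0 _ h1 h2 => hw; apply: addr_ge0.
      by apply: mulr_ge0 => //; lra.
    by apply: mulr_ge0; [apply: mulr_ge0 => //; lra | lra].
  - rewrite lee_fin.
    have h := step0 z0 x Zz0.
    have h' : Wf (Tst (S0 z0 x) x) <= q^-1 * (dv (z0 - zs) + 8 * q * tau ^+ 2 * dv (Fh z0 x - F z0)).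
      by rewrite -(ler_pM2l q0) mulrA mulfV ?gt_eqF // mul1r.
    have h'' : rm * (2 * Wf (Tst (S0 z0 x) x)) <=
       rm * (2 * (q^-1 * (dv (z0 - zs) + 8 * q * tau ^+ 2 * dv (Fh z0 x - F z0)))).
      by apply: ler_wpM2l => //; lra.
    have e8 : q^-1 * (8 * q * tau ^+ 2 * dv (Fh z0 x - F z0)) = 8 * tau ^+ 2 * dv (Fh z0 x - F z0).
      have qn : q != 0 by rewrite gt_eqF.
      by field.
    rewrite [q^-1 * (_ + _)]mulrDr e8 in h''.
    rewrite /K /k1 /dv -!normv_sq in h'' *.
    lra.
apply: le_trans (@int_bound R n d Xi Fh hmeas P F z0 delta sigma (hd z0 Zz0) (hs z0 Zz0) K k1 0 K0 k10 l00) _.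
have e : q^-1 ^+ m.+1 = rm * q^-1 by rewrite exprSr.
rewrite lee_fin /K /k1 e.
have : rm * (16 * tau ^+ 2) * sigma ^+ 2 <= rm * (c2 * M).
  rewrite -mulrA; apply: ler_wpM2l => //.
  have := sqr_ge0 tau; have := sqr_ge0 sigma; nra.
lra.
Qed.
End Main.

Theorem theorem2 (R : realType) (n : nat) (Z : set 'rV[R]_n)
  (F : 'rV[R]_n -> 'rV[R]_n) (mu L : R) (zstar : 'rV[R]_n)
  (PZ : 'rV[R]_n -> 'rV[R]_n)
  (d : measure_display) (Xi : measurableType d) (P : probability Xi R)
  (Fh : 'rV[R]_n -> Xi -> 'rV[R]_n) (delta sigma : R)
  (alpha gamma tau theta : R) (z0 : 'rV[R]_n) :
  Z !=set0 -> closed Z -> convex_set Z ->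
  0 < mu -> mu <= L ->
  (forall z z', Z z -> Z z' -> mu * normv (z - z') ^+ 2 <= dotv (F z - F z') (z - z')) ->
  (forall z z', Z z -> Z z' -> normv (F z - F z') <= L * normv (z - z')) ->
  Z zstar -> (forall z, Z z -> 0 <= dotv (F zstar) (z - zstar)) ->
  is_projection Z PZ ->
  measurable_fun setT (fun p : (vecB R n * Xi)%type => (Fh p.1 p.2 : vecB R n)) ->
  0 <= delta -> 0 <= sigma ->
  (forall z, Z z -> (\int[P]_x (normv (Fh z x - F z))%:E <= delta%:E)%E) ->
  (forall z, Z z -> (\int[P]_x (normv (Fh z x - F z) ^+ 2)%:E <= (sigma ^+ 2)%:E)%E) ->
  Z z0 ->
  0 <= alpha -> 0 <= gamma -> 0 <= tau ->
  0 < theta <= 1 ->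
  1 + theta / (L / mu) <= 1 + alpha * mu - gamma ->
  alpha / tau = 1 + theta / (L / mu) ->
  1 + theta / (L / mu) <= 1 / (8 * tau ^+ 2 * L ^+ 2 + 2 * gamma) ->
  forall k : nat,
    (iexp P k (fun s => (normv (sem_iter PZ Fh alpha gamma tau z0 s k - zstar) ^+ 2)%:E)
     <= (2 * (1 + theta / (L / mu)) ^- k * normv (z0 - zstar) ^+ 2
         + (L / mu / theta + 1) * 32 * tau ^+ 2 * sigma ^+ 2
         + 2 * (L / mu) * alpha * delta ^+ 2 / (theta * mu))%:E)%E.

Proof.
move=> hne hcl hC mu0 muL hmono hlip Zzs hopt hP hmeas delta0 sigma0 hd hs Zz0
  alpha0 gamma0 tau00 /andP[th0 th1] hC1 hA hC3 k.
set kap := L / mu in hA hC1 hC3 *.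
have kap0 : 0 < kap by rewrite /kap divr_gt0 //; lra.
set q := 1 + theta / kap in hA hC1 hC3 *.
have tk : 0 < theta / kap by apply: divr_gt0.
have q1 : 1 <= q by rewrite /q; lra.
have q0 : 0 < q by lra.
have tau0 : 0 < tau.
  rewrite lt_neqAle tau00 andbT; apply/negP => /eqP t0.
  by move: hA; rewrite -t0 invr0 mulr0 => hq; lra.
have halpha : alpha = tau * q.
  by rewrite -hA mulrC mulfVK // gt_eqF.
have L0 : 0 <= L by lra.
set X := 8 * tau ^+ 2 * L ^+ 2 + 2 * gamma in hC3.
have X0 : 0 <= X.
  rewrite /X; apply: addr_ge0; last by lra.
  by apply: mulr_ge0; [apply: mulr_ge0; [lra | exact: sqr_ge0] | exact: sqr_ge0].
have Xp : 0 < X.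
  rewrite lt_neqAle X0 andbT; apply/negP => /eqP X00.
  by move: hC3; rewrite -X00 div1r invr0 => h; lra.
have C3 : q * (gamma + 4 * tau ^+ 2 * L ^+ 2) <= 1 / 2.
  have : q * X <= 1.
    have h : q * X <= 1 / X * X by apply: ler_wpM2r => //.
    by rewrite div1r mulVf ?gt_eqF // in h.
  rewrite /X => h; lra.
set M := L / mu / theta + 1.
have hM : M * (1 - q^-1) = 1.
  rewrite /M /q -/kap.
  have kn : kap != 0 by rewrite gt_eqF.
  have tn : theta != 0 by rewrite gt_eqF.
  have qn : 1 + theta / kap != 0 by rewrite gt_eqF.
  by field; rewrite ?kn ?tn //; move: qn; rewrite -[1 + theta / kap]mul1r;
    rewrite (mulrC 1) => _; rewrite gt_eqF //; lra.
have := @final_bound R n Z F mu L zstar PZ d Xi P Fh delta sigma alpha gamma tau q hC mu0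
  hmono hlip Zzs hopt hP L0 alpha0 gamma0 tau0 q1 hC1 halpha C3 hmeas hd hs M hM z0 k Zz0.
move=> h; apply: le_trans h _; rewrite lee_fin.
rewrite exprVn -normv_sq.
suff : c2 R mu delta sigma tau q * M <= M * 32 * tau ^+ 2 * sigma ^+ 2 + 2 * kap * alpha * delta ^+ 2 / (theta * mu).
  rewrite /M /kap; lra.
have eMq : M * q^-1 = kap / theta.
  rewrite /M /q -/kap.
  have kn : kap != 0 by rewrite gt_eqF.
  have tn : theta != 0 by rewrite gt_eqF.
  by field; rewrite kn tn //=; rewrite gt_eqF //; lra.
rewrite /c2 mulrDl.
have e1 : 2 * tau * delta ^+ 2 * q^-1 / mu * M = 2 * tau * delta ^+ 2 / mu * (kap / theta).
  by rewrite -eMq; ring.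
have e2 : 2 * kap * alpha * delta ^+ 2 / (theta * mu) = 2 * alpha * delta ^+ 2 / mu * (kap / theta).
  by field; rewrite !gt_eqF.
rewrite e1 e2.
have h3 : 2 * tau * delta ^+ 2 / mu * (kap / theta) <= 2 * alpha * delta ^+ 2 / mu * (kap / theta).
  apply: ler_wpM2r; first by apply: divr_ge0; lra.
  apply: ler_wpM2r; first by rewrite invr_ge0; lra.
  apply: ler_wpM2r; first exact: sqr_ge0.
  rewrite halpha; nra.
lra.
Qed.
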